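(* Let $\mathbf{A}=(a_{ij})$ be a table with a proper row partition $(R_1,\dots,R_k)$ and a proper column partition $(C_1,\dots,C_k)$, and assume that there are numbers $c_{ab}>0$ ($1\le a,b\le k$) such that $a_{ij}=c_{ab}$ for all $1\le a,b\le k$, $i\in R_a$, $j\in C_b$. Then \[ 0={\mathrm{disc}}_k(\mathbf{A})={\mathrm{disc}}_{k+1}(\mathbf{A})=\cdots={\mathrm{disc}}_{\mathrm{rank}\,\mathbf{A}}(\mathbf{A}). \]
   Context: Standing assumptions: $\mathbf{A}$ is an $m\times n$ array of nonnegative entries whose total sum is $1$, and $\mathbf{A}$ is non-decomposable ($\mathbf{A}\mathbf{A}^T$ if $m\le n$, or $\mathbf{A}^T\mathbf{A}$ if $m>n$, is irreducible); in particular all row sums $d_{row,i}=\sum_j a_{ij}$ and column sums $d_{col,j}=\sum_i a_{ij}$ are positive. Let $R$ be the row set and $C$ the column set. For $X\subset R$, $Y\subset C$: ${\mathrm{Vol}}(X)=\sum_{i\in X}d_{row,i}$, ${\mathrm{Vol}}(Y)=\sum_{j\in Y}d_{col,j}$, $a(X,Y)=\sum_{i\in X}\sum_{j\in Y}a_{ij}$, and for nonempty $X,Y$, $\rho(X,Y)=\frac{a(X,Y)}{{\mathrm{Vol}}(X){\mathrm{Vol}}(Y)}$. For a proper $\ell$-partition $R_1,\dots,R_\ell$ of $R$ and $C_1,\dots,C_\ell$ of $C$ (all parts nonempty), and nonempty $X\subset R_a$, $Y\subset C_b$, ${\mathrm{disc}}(X,Y;R_a,C_b)=|\rho(X,Y)-\rho(R_a,C_b)|\sqrt{{\mathrm{Vol}}(X){\mathrm{Vol}}(Y)}$;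 ${\mathrm{disc}}(\mathbf{A};R_1,\dots,R_\ell,C_1,\dots,C_\ell)=\max_{1\le a,b\le \ell}\max_{X\subset R_a,\,Y\subset C_b}{\mathrm{disc}}(X,Y;R_a,C_b)$; and ${\mathrm{disc}}_\ell(\mathbf{A})$ is the minimum of this quantity over all proper $\ell$-partitions of the rows and of the columns. *)

(* Defs.v *)
From HB Require Import structures.
From mathcomp Require Import all_boot all_order all_algebra.
Set Implicit Arguments. Unset Strict Implicit. Unset Printing Implicit Defensive.
Import Order.TTheory GRing.Theory Num.Theory.
Local Open Scope ring_scope.

Section Defs.
Variable R : rcfType.
Variables m n : nat.
Implicit Type A : 'M[R]_(m, n).

Definition volR A (X : {set 'I_m}) : R := \sum_(i in X) \sum_(j < n) A i j.
Definition volC A (Y : {set 'I_n}) : R := \sum_(j in Y) \sum_(i < m) A i j.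
Definition aXY A (X : {set 'I_m}) (Y : {set 'I_n}) : R :=
  \sum_(i in X) \sum_(j in Y) A i j.
Definition rho A X Y : R := aXY A X Y / (volR A X * volC A Y).

Definition discXY A (X Ra : {set 'I_m}) (Y Cb : {set 'I_n}) : R :=
  `|rho A X Y - rho A Ra Cb| * Num.sqrt (volR A X * volC A Y).

(* an l-partition of a finite index set, given by labelling each element
   with its part; it is proper iff every part is nonempty (surjective). *)
Definition proper_part (T : finType) (l : nat) (f : {ffun T -> 'I_l}) : bool :=
  [forall a : 'I_l, a \in codom f].

Definition part_block (T : finType) (l : nat) (f : {ffun T -> 'I_l}) (a : 'I_l)
  : {set T} := [set x | f x == a].

(* disc(A; R_1..R_l, C_1..C_l) : the maximum over blocks a,b and nonempty
   X ⊆ R_a, Y ⊆ C_b (all values are >= 0, so 0 is a neutral element). *)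
Definition disc_part A (l : nat) (f : {ffun 'I_m -> 'I_l}) (g : {ffun 'I_n -> 'I_l})
  : R :=
  \big[Num.max/0]_(a : 'I_l) \big[Num.max/0]_(b : 'I_l)
   \big[Num.max/0]_(X : {set 'I_m} | (X != set0) && (X \subset part_block f a))
   \big[Num.max/0]_(Y : {set 'I_n} | (Y != set0) && (Y \subset part_block g b))
     discXY A X (part_block f a) Y (part_block g b).

Definition proper_pair (l : nat) (p : {ffun 'I_m -> 'I_l} * {ffun 'I_n -> 'I_l})
  : bool := proper_part p.1 && proper_part p.2.

(* The big
   min uses as initial value the maximum over the same (finite) family, so
   that it equals the true minimum whenever the family is nonempty. *)
Definition disc_l A (l : nat) : R :=
  let M := \big[Num.max/0]_(p : {ffun 'I_m -> 'I_l} * {ffun 'I_n -> 'I_l} | proper_pair p)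
     disc_part A p.1 p.2 in
  \big[Num.min/M]_(p : {ffun 'I_m -> 'I_l} * {ffun 'I_n -> 'I_l} | proper_pair p)
     disc_part A p.1 p.2.

Definition irreducible_mx (k : nat) (B : 'M[R]_k) : Prop :=
  forall i j : 'I_k, connect [rel x y | B x y != 0] i j.

Definition non_decomposable A : Prop :=
  if (m <= n)%N then irreducible_mx (A *m A^T) else irreducible_mx (A^T *m A).

End Defs.

(* Main.v *)
Require Import Defs.
From HB Require Import structures.
From mathcomp Require Import all_boot all_order all_algebra.
From mathcomp Require Import ring.
Import Order.TTheory GRing.Theory Num.Theory.
Local Open Scope ring_scope.
Set Implicit Arguments. Unset Strict Implicit.

Definition refP (T : finType) k (r : {ffun T -> 'I_k}) (l : nat) : Prop :=
  exists f : {ffun T -> 'I_l}, proper_part f /\ forall x y, f x = f y -> r x = r y.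

Lemma refP_step (T : finType) k (r : {ffun T -> 'I_k}) l :
  (l < #|T|)%N -> refP r l -> refP r l.+1.
Proof.
move=> lT [f [pf rf]].
case: (boolP [exists x, exists y, (x != y) && (f x == f y)]); last first.
  move=> H; have injf : injective f.
    move=> x y e; apply/eqP; apply: contraNT H => neq.
    by apply/existsP; exists x; apply/existsP; exists y; rewrite neq e eqxx.
  have := leq_card _ injf; rewrite card_ord => le; by rewrite ltnNge le in lT.
move=> /existsP[x /existsP[y /andP[nxy /eqP fxy]]].
exists [ffun t => if t == x then ord_max else widen_ord (leqnSn l) (f t)].
split.
  apply/forallP => a; apply/codomP.
  case: (boolP (a == ord_max)) => [/eqP -> | na].
    by exists x; rewrite ffunE eqxx.
  have al : (a < l)%N.
    have := ltn_ord a; rewrite ltnS leq_eqVlt => /orP[/eqP e|//].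
    by move: na; rewrite -(inj_eq val_inj) /= e eqxx.
  have /codomP [t et] := forallP pf (Ordinal al).
  case: (boolP (t == x)) => [/eqP tx | ntx].
    exists y; rewrite ffunE eq_sym (negbTE nxy); apply/val_inj => /=.
    by rewrite -fxy -tx -et.
  by exists t; rewrite ffunE (negbTE ntx); apply/val_inj => /=; rewrite -et.
move=> u v; rewrite !ffunE.
case: (boolP (u == x)) => [/eqP -> | nux]; case: (boolP (v == x)) => [/eqP -> | nvx] //.
- move/(congr1 val) => /= e; have := ltn_ord (f v); by rewrite -e ltnn.
- move/(congr1 val) => /= e; have := ltn_ord (f u); by rewrite e ltnn.
- by move/(congr1 val) => /= e; apply: rf; apply/val_inj.
Qed.

Lemma refine_exists (T : finType) k (r : {ffun T -> 'I_k}) :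
  proper_part r -> forall l, (k <= l <= #|T|)%N -> refP r l.
Proof.
move=> pr l /andP[kl lT].
have [d e] : exists d, l = (k + d)%N by exists (l - k)%N; rewrite subnKC.
subst l; move: lT; clear kl.
elim: d => [|d IH] H.
  rewrite addn0; exists r; split => //.
rewrite addnS in H *; apply: refP_step => //.
by apply: IH; apply: ltnW.
Qed.

Lemma bigmax0 (R : rcfType) (I : Type) (s : seq I) (P : pred I) (F : I -> R) :
  (forall i, P i -> F i = 0) -> \big[Num.max/0]_(i <- s | P i) F i = 0.
Proof.
move=> H; apply: (big_rec (fun x => x = 0)) => // i x Pi ->.
by rewrite H // maxxx.
Qed.

Lemma bigmax_ge0 (R : rcfType) (I : Type) (s : seq I) (P : pred I) (F : I -> R) :
  0 <= \big[Num.max/0]_(i <- s | P i) F i.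
Proof.
apply: (big_rec (fun x => 0 <= x)) => // i x Pi x0.
by rewrite le_max x0 orbT.
Qed.

Lemma bigmin_ge0 (R : rcfType) (I : Type) (s : seq I) (P : pred I) (F : I -> R) x0 :
  0 <= x0 -> (forall i, P i -> 0 <= F i) -> 0 <= \big[Num.min/x0]_(i <- s | P i) F i.
Proof.
move=> h0 H; apply: (big_rec (fun x => 0 <= x)) => // i x Pi xx.
by rewrite le_min xx H.
Qed.

Lemma bigmin_le (R : rcfType) (I : eqType) (s : seq I) (P : pred I) (F : I -> R) x0 p :
  p \in s -> P p -> \big[Num.min/x0]_(i <- s | P i) F i <= F p.
Proof.
elim: s => // a s IH; rewrite in_cons => /orP[/eqP -> | ps] Pp; rewrite big_cons.
  by rewrite Pp ge_min lexx.
case: (P a); last exact: IH.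
by rewrite ge_min IH ?orbT.
Qed.

Section Main.
Variables (R : rcfType) (m n k : nat) (A : 'M[R]_(m, n)).
Variables (r : {ffun 'I_m -> 'I_k}) (s : {ffun 'I_n -> 'I_k}).
Variables (c : 'I_k -> 'I_k -> R).
Hypothesis c_pos : forall a b, 0 < c a b.
Hypothesis A_block : forall i j, A i j = c (r i) (s j).
Hypothesis row_pos : forall i, 0 < \sum_(j < n) A i j.
Hypothesis col_pos : forall j, 0 < \sum_(i < m) A i j.

Definition dr a := \sum_(j < n) c a (s j).
Definition dc b := \sum_(i < m) c (r i) b.

Lemma rho_const (X : {set 'I_m}) (Y : {set 'I_n}) a b :
  X != set0 -> Y != set0 ->
  (forall i, i \in X -> r i = a) -> (forall j, j \in Y -> s j = b) ->
  (exists i, r i = a) -> (exists j, s j = b) ->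
  rho A X Y = c a b / (dr a * dc b).
Proof.
move=> X0 Y0 HX HY [i0 ei0] [j0 ej0].
have dra : 0 < dr a.
  have := row_pos i0; rewrite /dr -ei0.
  by under eq_bigr do rewrite A_block.
have dcb : 0 < dc b.
  have := col_pos j0; rewrite /dc -ej0.
  by under eq_bigr do rewrite A_block.
have e1 : aXY A X Y = c a b *+ #|X| *+ #|Y|.
  rewrite /aXY (eq_bigr (fun _ => c a b *+ #|Y|)).
    by rewrite sumr_const mulrnAC.
  move=> i iX; rewrite -sumr_const; apply: eq_bigr => j jY.
  by rewrite A_block HX // HY.
have e2 : volR A X = dr a *+ #|X|.
  rewrite /volR (eq_bigr (fun _ => dr a)); first by rewrite sumr_const.
  move=> i iX; rewrite /dr; apply: eq_bigr => j _; by rewrite A_block HX.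
have e3 : volC A Y = dc b *+ #|Y|.
  rewrite /volC (eq_bigr (fun _ => dc b)); first by rewrite sumr_const.
  move=> j jY; rewrite /dc; apply: eq_bigr => i _; by rewrite A_block HY.
have cX : (#|X|%:R : R) != 0 by rewrite pnatr_eq0 -lt0n card_gt0.
have cY : (#|Y|%:R : R) != 0 by rewrite pnatr_eq0 -lt0n card_gt0.
rewrite /rho e1 e2 e3 -(mulr_natr (c a b)) -(mulr_natr (c a b * _)) -(mulr_natr (dr a)) -(mulr_natr (dc b)).
have : dr a != 0 by rewrite gt_eqF.
have : dc b != 0 by rewrite gt_eqF.
move=> h1 h2.
field; rewrite ?h1 ?h2 ?cX ?cY //.
Qed.

Lemma disc_part0 l (f : {ffun 'I_m -> 'I_l}) (g : {ffun 'I_n -> 'I_l}) :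
  (forall x y, f x = f y -> r x = r y) -> (forall x y, g x = g y -> s x = s y) ->
  disc_part A f g = 0.
Proof.
move=> rf sg; rewrite /disc_part.
apply: bigmax0 => a _; apply: bigmax0 => b _.
apply: bigmax0 => X /andP[X0 XR]; apply: bigmax0 => Y /andP[Y0 YC].
have [x0 x0X] := set0Pn _ X0; have [y0 y0Y] := set0Pn _ Y0.
have x0R : x0 \in part_block f a by apply: (subsetP XR).
have y0C : y0 \in part_block g b by apply: (subsetP YC).
have HR : forall i, i \in part_block f a -> r i = r x0.
  move=> i; rewrite !inE in x0R * => /eqP e; apply: rf; by rewrite e (eqP x0R).
have HC : forall j, j \in part_block g b -> s j = s y0.
  move=> j; rewrite !inE in y0C * => /eqP e; apply: sg; by rewrite e (eqP y0C).
rewrite /discXY (rho_const (a:=r x0) (b:=s y0) X0 Y0); first last.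
- by exists y0.
- by exists x0.
- by move=> j /(subsetP YC); apply: HC.
- by move=> i /(subsetP XR); apply: HR.
rewrite (rho_const (a:=r x0) (b:=s y0)); first last.
- by exists y0.
- by exists x0.
- exact: HC.
- exact: HR.
- by apply/set0Pn; exists y0.
- by apply/set0Pn; exists x0.
by rewrite subrr normr0 mul0r.
Qed.

Lemma disc_l0 l (f : {ffun 'I_m -> 'I_l}) (g : {ffun 'I_n -> 'I_l}) :
  proper_part f -> proper_part g ->
  (forall x y, f x = f y -> r x = r y) -> (forall x y, g x = g y -> s x = s y) ->
  disc_l A l = 0.
Proof.
move=> pf pg rf sg; rewrite /disc_l; apply/eqP; rewrite eq_le; apply/andP; split.
  apply: (le_trans (bigmin_le _ _ (mem_index_enum (f, g)) _)).
    by rewrite /proper_pair /= pf pg.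
  by rewrite /= (disc_part0 rf sg).
apply: bigmin_ge0; first exact: bigmax_ge0.
move=> p _; exact: bigmax_ge0.
Qed.

End Main.

Theorem mainTheorem5 (R : rcfType) (m n k : nat) (A : 'M[R]_(m, n))
  (A_nonneg : forall i j, 0 <= A i j)
  (A_sum1 : \sum_(i < m) \sum_(j < n) A i j = 1)
  (A_nondec : non_decomposable A)
  (row_pos : forall i, 0 < \sum_(j < n) A i j)
  (col_pos : forall j, 0 < \sum_(i < m) A i j)
  (r : {ffun 'I_m -> 'I_k}) (s : {ffun 'I_n -> 'I_k})
  (r_proper : proper_part r) (s_proper : proper_part s)
  (c : 'I_k -> 'I_k -> R) (c_pos : forall a b, 0 < c a b)
  (A_block : forall i j, A i j = c (r i) (s j)) :
  disc_l A k = 0 /\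
  (forall l : nat, (k <= l <= \rank A)%N -> disc_l A l = 0).
Proof.
split.
  by apply: (disc_l0 A_block row_pos col_pos (f := r) (g := s)).
move=> l /andP[kl lr].
have [f [pf rf]] : refP r l.
  apply: refine_exists => //; rewrite kl card_ord /=.
  exact: leq_trans lr (rank_leq_row A).
have [g [pg sg]] : refP s l.
  apply: refine_exists => //; rewrite kl card_ord /=.
  exact: leq_trans lr (rank_leq_col A).
exact: (disc_l0 A_block row_pos col_pos pf pg rf sg).
Qed.
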